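(* Let $n$ be a positive integer and let $x\neq y$ be integers with $0\le x,y\le n$. If there is a cracked graceful permutation of length $n$ with first element $x$ and last element $y$, then $|x-y|\equiv \lfloor n/2\rfloor \pmod 2$.
   Context: A cracked graceful permutation of length $n$ is an arrangement $(a_1,\dots,a_n)$ of $n$ distinct integers from $\{0,1,\dots,n\}$ such that its absolute differences $|a_{i+1}-a_i|$ ($1\le i\le n-1$) are exactly the integers $\{1,\dots,n-1\}$. *)

(* Defs.v *)
From mathcomp Require Import all_boot.
Set Implicit Arguments. Unset Strict Implicit. Unset Printing Implicit Defensive.

Definition absdiff (a b : nat) : nat := maxn a b - minn a b.

Definition diffs (s : seq nat) : seq nat :=
  [seq absdiff p.1 p.2 | p <- zip s (behead s)].

Definition cracked_graceful (n : nat) (s : seq nat) : Prop :=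
  [/\ size s = n, uniq s, all (fun a => a <= n) s
    & perm_eq (diffs s) (iota 1 n.-1)].

(* Main.v *)
Require Import Defs.
From mathcomp Require Import all_boot zify.

Lemma oddabs a b : odd (absdiff a b) = odd (a + b).
Proof.
rewrite /absdiff.
have: (maxn a b - minn a b) %% 2 = (a + b) %% 2 by lia.
by rewrite !modn2; case: odd; case: odd.
Qed.

Lemma odd_diffs t a : odd (sumn (diffs (a :: t))) = odd (a + last a t).
Proof.
elim: t a => [|b t IH] a; first by rewrite /= addnn odd_double.
have -> : diffs [:: a, b & t] = absdiff a b :: diffs (b :: t) by [].
rewrite /= oddD oddabs IH !oddD.
by case: (odd a); case: (odd b); case: (odd (last b t)).
Qed.

Lemma odd_iota m : odd (sumn (iota 1 m)) = odd (m.+1./2).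
Proof.
elim: m => [|m IH] //.
have -> : iota 1 m.+1 = iota 1 (m + 1) by rewrite addn1.
rewrite iotaD sumn_cat oddD IH /= addn0 ?add1n ?addn1.
idtac.
have: odd (m./2.+1) = odd (m.+1./2) (+) ~~ odd m.
  rewrite -!divn2. have := odd_mod m. lia.
move=> /= ->; rewrite add0n; by case: (odd m); case: (odd _).
Qed.

Theorem lemma5p11 (n x y : nat) (s : seq nat) :
  0 < n -> x != y -> x <= n -> y <= n ->
  cracked_graceful n s -> head 0 s = x -> last 0 s = y ->
  absdiff x y = n %/ 2 %[mod 2].
Proof.
move=> n0 _ _ _ [sz _ _ hp] hx hy.
case: s sz hp hx hy => [|a t] sz hp /= hx hy; first by rewrite -sz in n0.
have := odd_diffs t a.
rewrite (perm_sumn hp) odd_iota prednK // hy hx -oddabs divn2 => H.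
by rewrite !modn2 H.
Qed.
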